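(* Let $A$ be a calibrated $R$-superalgebra and $V$ a calibrated $A$-supermodule. Then $\tilde\Gamma^dV\subseteq\Gamma^dV$ is a $\tilde\Gamma^dA$-submodule, i.e. $\eta\, y\in\tilde\Gamma^dV$ for all $\eta\in\tilde\Gamma^dA$ and $y\in\tilde\Gamma^dV$.
   Context: Let $R$ be a principal ideal domain of characteristic $0$. A calibrated $R$-supermodule is a free $R$-supermodule $V=V_{\bar0}\oplus V_{\bar1}$ of finite rank with a decomposition $V_{\bar0}=V_{\mathfrak a}\oplus V_{\mathfrak c}$ into free $R$-submodules; choose bases $B_{\mathfrak a},B_{\mathfrak c},B_{\bar1}$, let $B$ be their union, fix a total order on $B$. $\mathfrak S_d$ acts on $V^{\otimes d}$ by $(v_1\otimes\cdots\otimes v_d)^\sigma=(-1)^{\langle\sigma;\mathbf v\rangle}v_{\sigma1}\otimes\cdots\otimes v_{\sigma d}$, $\langle\sigma;\mathbf v\rangle$ = number of $k<l$ with $\sigma^{-1}k>\sigma^{-1}l$ and $v_k,v_l$ odd; $\Gamma^dV$ = invariants. For $\mathbf b\in B^d$: $\langle\mathbf b\rangle$ = number of $k<l$ with $b_k,b_l\in B_{\bar1}$, $b_k>b_l$; $[\mathbf b]^!_{\mathfrak c}=\prod_{b\in B_{\mathfrak c}}\#\{k:b_k=b\}!$; $\mathrm{Seq}(B,d)$ = tuples in which only elements of $B_{\mathfrak a}\sqcup B_{\mathfrak c}$ may repeat; $x_{\mathbf b}=\sum(-1)^{\langle\mathbf b\rangle+\langle\mathbf b'\rangle}b'_1\otimes\cdots\otimes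 b'_d$ over distinct place-permutations $\mathbf b'$ of $\mathbf b$; $y_{\mathbf b}=[\mathbf b]^!_{\mathfrak c}x_{\mathbf b}$; $\tilde\Gamma^dV=\mathrm{span}_R\{y_{\mathbf b}:\mathbf b\in\mathrm{Seq}(B,d)\}$. A calibrated $R$-superalgebra is an $R$-superalgebra $A$, free of finite rank, with a decomposition $A_{\bar0}=\mathfrak a\oplus\mathfrak c$ into free $R$-submodules such that $\mathfrak a$ is a unital subalgebra; regarding $A$ as a calibrated supermodule gives $\tilde\Gamma^dA\subseteq\Gamma^dA\subseteq A^{\otimes d}$, where $A^{\otimes d}$ is a superalgebra with $(a_1\otimes\cdots\otimes a_d)(b_1\otimes\cdots\otimes b_d)=(-1)^{\langle\mathbf a,\mathbf b\rangle}a_1b_1\otimes\cdots\otimes a_db_d$ ($\langle\mathbf a,\mathbf b\rangle$ = number of $k>l$ with $a_k,b_l$ odd); $\tilde\Gamma^dA$ is a unital subsuperalgebra of $\Gamma^dA$. If $V$ is an $A$-supermodule then $V^{\otimes d}$ is an $A^{\otimes d}$-supermodule via $(a_1\otimes\cdots\otimes a_d)(v_1\otimes\cdots\otimes v_d)=(-1)^{\langle\mathbf a,\mathbf v\rangle}a_1v_1\otimes\cdots\otimes a_dv_d$, and $\Gamma^dV$ is a $\Gamma^dA$-submodule. A calibrated $A$-supermodule is an $A$-supermodule $V$ which is a calibrated $R$-supermodule with $\mathfrak aV_{\mathfrak a}\subseteq V_{\mathfrak a}$. *)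

(* Defs.v *)
(* Everything is expressed in coordinates: a free R-module of
   finite rank with a chosen (totally ordered) basis B is modelled by functions
   'I_m -> R, the tensor power V^{(x)d} by functions d.-tuple 'I_m -> R. *)
From HB Require Import structures.
From mathcomp Require Import all_boot all_order all_algebra.
Set Implicit Arguments.
Unset Strict Implicit.
Unset Printing Implicit Defensive.
Import GRing.Theory.
Local Open Scope ring_scope.

(* The calibration of a basis element: in B_a, in B_c, or odd (in B_1). *)
Inductive calib := Ca | Cc | Codd.
Definition is_odd (c : calib) : bool := if c is Codd then true else false.
Definition is_a (c : calib) : bool := if c is Ca then true else false.
Definition is_c (c : calib) : bool := if c is Cc then true else false.

Definition is_PID (R : idomainType) : Prop :=
  forall I : R -> Prop,
    I 0 -> (forall x y, I x -> I y -> I (x + y)) -> (forall r x, I x -> I (r * x)) ->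
    exists g : R, forall x, I x <-> exists r, x = r * g.

Definition char0 (R : idomainType) : Prop := forall k : nat, (k.+1)%:R != 0 :> R.

Notation vect R m := {ffun 'I_m -> R}.
Notation tens R m d := {ffun d.-tuple 'I_m -> R}.

Section Defs.
Variable R : comNzRingType.

Definition sc (aT : finType) (r : R) (f : {ffun aT -> R}) : {ffun aT -> R} :=
  [ffun x => r * f x].

Section Sym.
Variables (m d : nat) (kd : 'I_m -> calib).

Definition inv_odd (b : d.-tuple 'I_m) : nat :=
  \sum_(k < d) \sum_(l < d | [&& (k < l)%N, is_odd (kd (tnth b k)),
                                is_odd (kd (tnth b l)) & (tnth b l < tnth b k)%N]) 1.

Definition cfact (b : d.-tuple 'I_m) : nat :=
  \prod_(x : 'I_m | is_c (kd x)) (count_mem x b)`!.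

Definition in_Seq (b : d.-tuple 'I_m) : bool :=
  [forall x : 'I_m, is_odd (kd x) ==> (count_mem x b <= 1)%N].

(* x_b = sum over distinct place permutations b' of b of (-1)^(<b>+<b'>) b' *)
Definition x_vec (b : d.-tuple 'I_m) : tens R m d :=
  [ffun t : d.-tuple 'I_m =>
     if perm_eq t b then (-1) ^+ (inv_odd b + inv_odd t) else 0].

Definition y_vec (b : d.-tuple 'I_m) : tens R m d := sc (cfact b)%:R (x_vec b).

Definition in_tGamma (v : tens R m d) : Prop :=
  exists f : d.-tuple 'I_m -> R, v = \sum_(b | in_Seq b) sc (f b) (y_vec b).
End Sym.

Section Alg.
Variables (n m : nat) (kdA : 'I_n -> calib) (mulA : 'I_n -> 'I_n -> vect R n)
          (oneA : vect R n) (kdV : 'I_m -> calib) (act : 'I_n -> 'I_m -> vect R m).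

Definition mulE (a b : vect R n) : vect R n :=
  \sum_(i : 'I_n) \sum_(j : 'I_n) sc (a i * b j) (mulA i j).
Definition actE (a : vect R n) (v : vect R m) : vect R m :=
  \sum_(i : 'I_n) \sum_(j : 'I_m) sc (a i * v j) (act i j).

(* calibrated R-superalgebra: associative unital R-superalgebra (parity
   preserving multiplication), with A_0 = a (+) c where a = span B_a is a
   unital subalgebra *)
Definition calibrated_superalgebra : Prop :=
  [/\ forall a b c, mulE (mulE a b) c = mulE a (mulE b c),
      forall a, mulE oneA a = a /\ mulE a oneA = a,
      forall i j k, mulA i j k != 0 -> is_odd (kdA k) = is_odd (kdA i) (+) is_odd (kdA j),
      forall k, oneA k != 0 -> is_a (kdA k)
    & forall i j k, is_a (kdA i) -> is_a (kdA j) -> mulA i j k != 0 -> is_a (kdA k)].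

Definition calibrated_supermodule : Prop :=
  [/\ forall a b v, actE (mulE a b) v = actE a (actE b v),
      forall v, actE oneA v = v,
      forall i j k, act i j k != 0 -> is_odd (kdV k) = is_odd (kdA i) (+) is_odd (kdV j)
    & forall i j k, is_a (kdA i) -> is_a (kdV j) -> act i j k != 0 -> is_a (kdV k)].

Variable d : nat.
Definition mix_sign (s : d.-tuple 'I_n) (t : d.-tuple 'I_m) : nat :=
  \sum_(k < d) \sum_(l < d | [&& (l < k)%N, is_odd (kdA (tnth s k)) & is_odd (kdV (tnth t l))]) 1.

Definition tens_act (eta : tens R n d) (y : tens R m d) : tens R m d :=
  \sum_(s : d.-tuple 'I_n) \sum_(t : d.-tuple 'I_m)
     sc (eta s * y t) [ffun u : d.-tuple 'I_m =>
        (-1) ^+ (mix_sign s t) * \prod_(k < d) act (tnth s k) (tnth t k) (tnth u k)].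
End Alg.
End Defs.

(* Main.v *)
Require Import Defs.
From HB Require Import structures.
From mathcomp Require Import all_boot all_order all_algebra all_fingroup ring.
Set Implicit Arguments.
Unset Strict Implicit.
Unset Printing Implicit Defensive.
Import GRing.Theory.

Definition tp (T : Type) (d : nat) (t : d.-tuple T) (p : 'S_d) : d.-tuple T :=
  [tuple tnth t (p k) | k < d].

Lemma tnth_tp (T : Type) d (t : d.-tuple T) p k : tnth (tp t p) k = tnth t (p k).
Proof. by rewrite tnth_mktuple. Qed.

Definition kos d (p : 'S_d) (b : 'I_d -> bool) : nat :=
  \sum_(k < d) \sum_(l < d | [&& (k < l)%N, (p l < p k)%N, b (p k) & b (p l)]) 1.

Definition X2 d (E : 'I_d -> 'I_d -> bool) :=
  \big[addb/false]_(i < d) \big[addb/false]_(j < d) E i j.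

Lemma odd_sum1 d (E : 'I_d -> 'I_d -> bool) :
  odd (\sum_(k < d) \sum_(l < d | E k l) 1) = X2 E.
Proof.
rewrite /X2 (big_morph odd oddD (erefl (odd 0))); apply: eq_bigr => k _.
rewrite (big_morph odd oddD (erefl (odd 0))) big_mkcond /=.
by apply: eq_bigr => l _; case: (E k l).
Qed.

Lemma X2_add d (E F : 'I_d -> 'I_d -> bool) :
  X2 (fun i j => E i j (+) F i j) = X2 E (+) X2 F.
Proof.
rewrite /X2 -big_split /=; apply: eq_bigr => i _; by rewrite -big_split.
Qed.

Lemma X2_perm d (p : 'S_d) (E : 'I_d -> 'I_d -> bool) :
  X2 (fun k l => E (p k) (p l)) = X2 E.
Proof.
rewrite /X2 [RHS](reindex_inj (@perm_inj _ p)) /=; apply: eq_bigr => k _.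
by rewrite [RHS](reindex_inj (@perm_inj _ p)).
Qed.

Lemma X2_sym d (F : 'I_d -> 'I_d -> bool) :
  (forall i, F i i = false) -> (forall i j : 'I_d, (i < j)%N -> F i j = F j i) -> X2 F = false.
Proof.
move=> Fd Fs.
have -> : X2 F = X2 (fun i j : 'I_d => (((i < j)%N && F i j) (+) ((j < i)%N && F i j))
                                 (+) ((i == j) && F i j)).
  apply: eq_bigr => i _; apply: eq_bigr => j _.
  have [lt|gt|eq] := ltngtP i j.
  - have -> : (i == j) = false by apply/eqP => E; rewrite E ltnn in lt.
    by case: (F i j).
  - have -> : (i == j) = false by apply/eqP => E; rewrite E ltnn in gt.
    by case: (F i j).
  - have E : i = j := val_inj eq.
    by rewrite E eqxx Fd.
rewrite !X2_add.
have -> : X2 (fun i j : 'I_d => (i == j) && F i j) = false.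
  rewrite /X2 big1 // => i _; rewrite big1 // => j _.
  by case: eqP => // ->; rewrite Fd.
have -> : X2 (fun i j : 'I_d => (j < i)%N && F i j) = X2 (fun i j : 'I_d => (i < j)%N && F i j).
  rewrite /X2 exchange_big; apply: eq_bigr => i _; apply: eq_bigr => j _.
  by case: ltnP => // /Fs ->.
by rewrite addbb.
Qed.

Lemma ltn_flip (x y : nat) : x != y -> (y < x)%N = ~~ (x < y)%N.
Proof. by move=> ne; rewrite ltnNge leq_eqVlt (negbTE ne). Qed.

Lemma ord_flip d (x y : 'I_d) : x != y -> (y < x)%N = ~~ (x < y)%N.
Proof. by move=> ne; apply: ltn_flip. Qed.

Lemma xor3 a b c : a (+) b (+) c = false -> a = b (+) c.
Proof. by case: a; case: b; case: c. Qed.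

Section K1.
Variables (m d : nat) (kd : 'I_m -> calib).

Lemma K1 (t : d.-tuple 'I_m) (p : 'S_d) :
  (forall i j, is_odd (kd (tnth t i)) -> tnth t i = tnth t j -> i = j) ->
  odd (inv_odd kd (tp t p)) =
  odd (inv_odd kd t) (+) odd (kos p (fun k => is_odd (kd (tnth t k)))).
Proof.
move=> dist; rewrite /inv_odd /kos !odd_sum1.
set O := fun k => is_odd (kd (tnth t k)).
have -> : X2 (fun k l => [&& (k < l)%N, is_odd (kd (tnth (tp t p) k)),
     is_odd (kd (tnth (tp t p) l)) & (tnth (tp t p) l < tnth (tp t p) k)%N])
  = X2 (fun i j => [&& ((p^-1)%g i < (p^-1)%g j)%N, O i, O j & (tnth t j < tnth t i)%N]).
  rewrite -[RHS](X2_perm p); apply: eq_bigr => k _; apply: eq_bigr => l _.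
  by rewrite /= !permK !tnth_tp.
have -> : X2 (fun k l => [&& (k < l)%N, (p l < p k)%N, O (p k) & O (p l)])
  = X2 (fun i j => [&& ((p^-1)%g i < (p^-1)%g j)%N, (j < i)%N, O i & O j]).
  rewrite -[RHS](X2_perm p); apply: eq_bigr => k _; apply: eq_bigr => l _.
  by rewrite /= !permK.
apply: xor3; rewrite -!X2_add.
apply: X2_sym => [i|i j lij]; first by rewrite /= !ltnn /= ?andbF.
have nij : i != j by rewrite neq_ltn lij.
have pn : (p^-1)%g i != (p^-1)%g j by rewrite (inj_eq (@perm_inj _ _)).
have gji : (j < i)%N = false by rewrite ltnNge ltnW.
rewrite (ord_flip pn) lij gji /O /=.
case Oi: (is_odd (kd (tnth t i))); case Oj: (is_odd (kd (tnth t j))) => //=; rewrite ?andbF //.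
have tn : tnth t i != tnth t j by apply/eqP => /(dist _ _ Oi) /eqP; rewrite (negbTE nij).
rewrite (ord_flip tn).
by case: ((p^-1)%g i < (p^-1)%g j)%N; case: (tnth t i < tnth t j)%N.
Qed.
End K1.

Lemma odd_kos d (p : 'S_d) (b : 'I_d -> bool) :
  odd (kos p b) = X2 (fun i j => [&& ((p^-1)%g i < (p^-1)%g j)%N, (j < i)%N, b i & b j]).
Proof.
rewrite /kos odd_sum1 -[RHS](X2_perm p); apply: eq_bigr => k _; apply: eq_bigr => l _.
by rewrite /= !permK.
Qed.

Section K2.
Variables (n m d : nat) (kdA : 'I_n -> calib) (kdV : 'I_m -> calib).

Lemma K2 (s : d.-tuple 'I_n) (t : d.-tuple 'I_m) (p : 'S_d) :
  let P := fun k => is_odd (kdA (tnth s k)) in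
  let Q := fun k => is_odd (kdV (tnth t k)) in
  odd (mix_sign kdA kdV (tp s p) (tp t p)) =
  odd (mix_sign kdA kdV s t) (+) odd (kos p P) (+) odd (kos p Q)
    (+) odd (kos p (fun k => P k (+) Q k)).
Proof.
move=> P Q; rewrite !odd_kos /mix_sign !odd_sum1.
have -> : X2 (fun k l => [&& (l < k)%N, is_odd (kdA (tnth (tp s p) k))
                           & is_odd (kdV (tnth (tp t p) l))])
  = X2 (fun i j => [&& ((p^-1)%g j < (p^-1)%g i)%N, P i & Q j]).
  rewrite -[RHS](X2_perm p); apply: eq_bigr => k _; apply: eq_bigr => l _.
  by rewrite /= !permK !tnth_tp.
have xor5 : forall a b c e f : bool, a (+) b (+) c (+) e (+) f = false -> a = b (+) c (+) e (+) f.
  by case; case; case; case; case.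
apply: xor5; rewrite -!X2_add.
apply: X2_sym => [i|i j lij]; first by rewrite /= !ltnn /= ?andbF.
have pn : (p^-1)%g i != (p^-1)%g j by rewrite (inj_eq (@perm_inj _ _)) neq_ltn lij.
have gji : (j < i)%N = false by rewrite ltnNge ltnW.
rewrite (ord_flip pn) lij gji /P /Q /=.
by case: ((p^-1)%g i < (p^-1)%g j)%N; case: (is_odd (kdA (tnth s i)));
  case: (is_odd (kdA (tnth s j))); case: (is_odd (kdV (tnth t i)));
  case: (is_odd (kdV (tnth t j))).
Qed.
End K2.

Lemma bx_invol (T : finType) (phi : T -> T) (F : T -> bool) :
  involutive phi -> (forall x, F (phi x) = F x) -> (forall x, F x -> phi x != x) ->
  \big[addb/false]_x F x = false.
Proof.
move=> inv Fphi Ffix.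
have -> : \big[addb/false]_x F x =
  \big[addb/false]_x ((enum_rank x < enum_rank (phi x))%N && F x)
  (+) \big[addb/false]_x ((enum_rank (phi x) < enum_rank x)%N && F x).
  rewrite -big_split; apply: eq_bigr => x _ /=.
  case Fx: (F x); rewrite ?andbF //=.
  have := Ffix x Fx; case: ltngtP => //= /val_inj /enum_rank_inj e.
  by rewrite -{1}e eqxx.
have -> : \big[addb/false]_x ((enum_rank (phi x) < enum_rank x)%N && F x)
  = \big[addb/false]_x ((enum_rank x < enum_rank (phi x))%N && F x).
  rewrite (reindex_inj (inv_inj inv)) /=.
  by apply: eq_bigr => x _; rewrite inv Fphi.
by rewrite addbb.
Qed.

Lemma kos_tperm d (i j : 'I_d) (b : 'I_d -> bool) :
  i != j -> b i -> b j -> odd (kos (tperm i j) b).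
Proof.
wlog lij : i j / (i < j)%N.
  move=> W nij bi bj; case: (ltngtP i j) => [l|l|e].
  - exact: W.
  - by rewrite tpermC; apply: W => //; rewrite eq_sym.
  - by rewrite (val_inj e) eqxx in nij.
move=> nij bi bj; set pi := tperm i j.
have bpi : forall x, b (pi x) = b x.
  by move=> x; rewrite /pi; case: tpermP => [->|->|]; rewrite ?bi ?bj.
have piK : involutive pi by move=> x; rewrite /pi tpermK.
rewrite /kos odd_sum1.
set K := fun k l : 'I_d => [&& (k < l)%N, (pi l < pi k)%N, b (pi k) & b (pi l)].
have -> : X2 K = \big[addb/false]_k K k (pi k)
   (+) X2 (fun k l => (l != pi k) && K k l).
  rewrite /X2 -big_split; apply: eq_bigr => k _ /=.
  rewrite (bigD1 (pi k)) //=; congr (_ (+) _); rewrite big_mkcond.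
  by apply: eq_bigr => l _; case: (l != pi k).
have -> : X2 (fun k l => (l != pi k) && K k l) = false.
  rewrite /X2 pair_big /=.
  apply: (@bx_invol _ (fun x => (pi x.2, pi x.1))).
  - by case=> x y /=; rewrite !piK.
  - case=> x y /=; rewrite piK (eq_sym (pi x)) /K piK piK !bpi.
    by case: (y != pi x); case: (x < y)%N; case: (pi y < pi x)%N; case: (b x); case: (b y).
  - case=> x y /= /andP [ne _]; apply/negP => /eqP [e1 e2].
    by rewrite -e1 piK eqxx in ne.
rewrite addbF (bigD1 i) //= big1 => [|k nki]; rewrite /K.
  by rewrite /pi tpermL tpermR lij bi bj.
rewrite /pi; case: tpermP => [e|e|ni nj].
- by rewrite e eqxx in nki.
- by rewrite e tpermL ltnNge ltnW.
- by rewrite ltnn.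
Qed.

Lemma kos_fix d (p : 'S_d) (b : 'I_d -> bool) :
  (forall k, p k != k -> b k = false) -> kos p b = 0%N.
Proof.
move=> H; rewrite /kos big1 // => k _; rewrite big_pred0 // => l.
apply/and4P => [[kl plk bk bl]].
have fk : p k = k.
  apply: (@perm_inj _ p); apply/eqP; apply: contraT => /H; by rewrite bk.
have fl : p l = l.
  apply: (@perm_inj _ p); apply/eqP; apply: contraT => /H; by rewrite bl.
by rewrite fk fl ltnNge ltnW in plk.
Qed.

Lemma count_tnth (T : eqType) d (u : d.-tuple T) x :
  count_mem x u = (\sum_(k < d | tnth u k == x) 1)%N.
Proof. by rewrite -sum1_count big_tuple. Qed.

Section Stab.
Variables (T : finType) (d : nat) (t : d.-tuple T).

Definition stabP (P : pred T) : {set {perm 'I_d}} :=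
  [set p : {perm 'I_d} | [forall k, (tnth t (p k) == tnth t k) && (P (tnth t k) || (p k == k))]].

Lemma stabPP (P : pred T) (p : {perm 'I_d}) :
  reflect (forall k, tnth t (p k) = tnth t k /\ (P (tnth t k) \/ p k = k)) (p \in stabP P).
Proof.
rewrite inE; apply: (iffP forallP) => [H k | H k].
  by have /andP [/eqP -> /orP [->|/eqP ->]] := H k; split => //; [left | right].
by have [-> [->|->]] := H k; rewrite !eqxx ?orbT.
Qed.

Lemma stabP_group (P : pred T) : group_set (stabP P).
Proof.
apply/group_setP; split.
  by apply/stabPP => k; rewrite perm1; split; last right.
move=> p q /stabPP Hp /stabPP Hq; apply/stabPP => k; rewrite permM.
have [e1 o1] := Hp k; have [e2 o2] := Hq (p k).
split; first by rewrite e2 e1.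
case: o1 => [o1|o1]; first by left.
by rewrite o1 in o2 *.
Qed.

Canonical stab_group (P : pred T) := Group (stabP_group P).

Definition fib (x : T) : {set 'I_d} := [set k | tnth t k == x].

Lemma card_fib x : #|fib x| = count_mem x t.
Proof. by rewrite count_tnth -sum1_card; apply: eq_bigl => k; rewrite inE. Qed.

Lemma stab_step (P : pred T) x (xs : seq T) : x \notin xs -> P x ->
  stabP [pred y | P y && (y \in x :: xs)] = (Sym (fib x) * stabP [pred y | P y && (y \in xs)])%g.
Proof.
move=> xn Px; apply/setP => r; apply/idP/idP.
- move/stabPP => Hr.
  pose f k := if tnth t k == x then r k else k.
  have finj : injective f.
    move=> k1 k2; rewrite /f.
    case E1: (tnth t k1 == x); case E2: (tnth t k2 == x).
    + exact: perm_inj.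
    + move=> e; have [e1 _] := Hr k1; rewrite e in e1.
      by rewrite e1 E1 in E2.
    + move=> e; have [e1 _] := Hr k2; rewrite -e in e1.
      by rewrite e1 E2 in E1.
    + by [].
  pose pi := perm finj.
  have piF : pi \in Sym (fib x).
    rewrite inE; apply/subsetP => k; rewrite inE permE /f inE.
    by case: (tnth t k == x); rewrite ?eqxx.
  apply/mulsgP; exists pi (pi^-1 * r)%g => //; last by rewrite mulKVg.
  apply/stabPP => k; rewrite permM.
  set j := (pi^-1)%g k; have pj : pi j = k by rewrite /j permKV.
  case Ek: (tnth t k == x).
  + have Ej : tnth t j == x.
      apply: contraT => nE; move: pj; rewrite permE /f (negbTE nE) => ejk.
      by rewrite ejk Ek in nE.
    have rj : r j = k by move: pj; rewrite permE /f Ej.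
    by rewrite rj; split; last right.
  + have pk : pi k = k by rewrite permE /f Ek.
    have jk : j = k by rewrite /j -{1}pk permK.
    rewrite jk; have [e1 o1] := Hr k; split => //.
    case: o1 => [|->]; last by right.
    rewrite /= inE => /andP [Pk /orP [/eqP E|Ik]]; [by rewrite E eqxx in Ek | by left; rewrite /= Pk Ik].
- case/mulsgP => pi g piF /stabPP Hg ->.
  move: piF; rewrite inE => piF.
  apply/stabPP => k; rewrite permM.
  have [e1 o1] := Hg (pi k).
  have tpk : tnth t (pi k) = tnth t k.
    case: (eqVneq (pi k) k) => [-> // | ne].
    have kF : k \in fib x by apply: (subsetP piF); rewrite inE.
    have := kF; rewrite -(perm_closed _ piF) !inE => /eqP ->.
    by move: kF; rewrite inE => /eqP ->.
  split; first by rewrite e1 tpk.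
  case: (eqVneq (pi k) k) => [epk | ne].
  + rewrite epk in o1 *; case: o1 => [|->]; last by right.
    by rewrite /= !inE => /andP [-> ->]; rewrite orbT; left.
  + have kF : k \in fib x by apply: (subsetP piF); rewrite inE.
    by move: kF; rewrite /fib !inE => /eqP ->; left; rewrite /= Px eqxx.
Qed.

Lemma stab_TI (P : pred T) x (xs : seq T) : x \notin xs ->
  Sym (fib x) :&: stabP [pred y | P y && (y \in xs)] = 1%g.
Proof.
move=> xn; apply/trivgP/subsetP => r; rewrite in_setI => /andP [pr /stabPP Hr]; move: pr; rewrite inE => pr.
rewrite inE; apply/eqP/permP => k; rewrite perm1; apply/eqP; apply: contraT => ne.
have kF : k \in fib x by apply: (subsetP pr); rewrite inE.
move: kF; rewrite inE => /eqP ek.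
have [_ [|]] := Hr k; last by move=> e; rewrite e eqxx in ne.
by rewrite /= ek (negbTE xn) andbF.
Qed.

Lemma card_stab_seq (P : pred T) (xs : seq T) : uniq xs ->
  #|stabP [pred y | P y && (y \in xs)]| = \prod_(x <- xs | P x) (count_mem x t)`!.
Proof.
elim: xs => [_ | x xs IH /andP [xn uxs]].
  rewrite big_nil.
  have -> : stabP [pred y | P y && (y \in [::])] = [set 1%g].
    apply/setP => r; rewrite [RHS]inE; apply/stabPP/eqP.
      move=> H; apply/permP => k; rewrite perm1.
      by have [_ [|//]] := H k; rewrite /= in_nil andbF.
    by move=> -> k; rewrite perm1; split; last right.
  by rewrite cards1.
rewrite big_cons; case Px: (P x); last first.
  rewrite -IH //; apply: eq_card => r; rewrite !inE.
  apply: eq_forallb => k; congr (_ && (_ || _)); rewrite /= inE.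
  by case: eqP => [->|]; rewrite ?Px.
rewrite stab_step // TI_cardMg; last exact: stab_TI.
by rewrite card_Sym card_fib IH.
Qed.

Lemma card_stab (P : pred T) : #|stabP P| = \prod_(x | P x) (count_mem x t)`!.
Proof.
rewrite -card_stab_seq ?index_enum_uniq //; apply: eq_card => r; rewrite !inE.
by apply: eq_forallb => k; rewrite /= mem_index_enum andbT.
Qed.
End Stab.

Local Open Scope ring_scope.

Lemma sgn_odd (R : ringType) (a b : nat) : odd a = odd b -> (-1) ^+ a = (-1) ^+ b :> R.
Proof. by move=> H; rewrite -signr_odd H signr_odd. Qed.

Lemma perm_tp (T : eqType) d (u : d.-tuple T) p : perm_eq (tp u p) u.
Proof. by apply/tuple_permP; exists p. Qed.

Lemma tp_inj (T : Type) d (p : 'S_d) : injective (fun s : d.-tuple T => tp s p).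
Proof.
move=> s1 s2 /= e; apply: eq_from_tnth => k.
by have := congr1 (fun s => tnth s ((p^-1)%g k)) e; rewrite !tnth_tp permKV.
Qed.



Section Sym.
Variables (R : idomainType) (m d : nat) (kd : 'I_m -> calib).

Definition symm (v : tens R m d) : Prop :=
  forall u (p : 'S_d), v (tp u p) = (-1) ^+ kos p (fun k => is_odd (kd (tnth u k))) * v u.

Lemma Seq_distinct (b u : d.-tuple 'I_m) : in_Seq kd b -> perm_eq u b ->
  forall i j, is_odd (kd (tnth u i)) -> tnth u i = tnth u j -> i = j.
Proof.
move=> /forallP Sb /seq.permP pe i j oi eij; apply/eqP; apply: contraT => nij.
have := Sb (tnth u i); rewrite oi /= -pe count_tnth (bigD1 i) ?eqxx //=.
rewrite (bigD1 j) /=; last by rewrite eij eqxx eq_sym nij.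
by [].
Qed.

Lemma x_vec_symm b : in_Seq kd b -> symm (x_vec R kd b).
Proof.
move=> Sb u p; rewrite /x_vec !ffunE (permPl (perm_tp u p)).
case pub: (perm_eq u b); last by rewrite mulr0.
rewrite -exprD; apply: sgn_odd.
rewrite !oddD K1; last exact: Seq_distinct Sb pub.
by case: (odd (inv_odd kd b)); case: (odd (inv_odd kd u)); case: (odd (kos _ _)).
Qed.

Lemma symm0 : symm 0.
Proof. by move=> u p; rewrite !ffunE mulr0. Qed.

Lemma symmD v w : symm v -> symm w -> symm (v + w).
Proof. by move=> sv sw u p; rewrite !ffunE sv sw mulrDr. Qed.

Lemma symm_sc r v : symm v -> symm (sc r v).
Proof. by move=> sv u p; rewrite /sc !ffunE sv mulrCA. Qed.

Lemma symm_sum (I : finType) (P : pred I) (F : I -> tens R m d) :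
  (forall i, P i -> symm (F i)) -> symm (\sum_(i | P i) F i).
Proof.
move=> H; elim/big_ind: _ => //; [exact: symm0 | exact: symmD].
Qed.

Lemma y_vec_symm b : in_Seq kd b -> symm (y_vec R kd b).
Proof. by move=> Sb; apply: symm_sc; apply: x_vec_symm. Qed.

Lemma tGamma_symm v : in_tGamma kd v -> symm v.
Proof.
case=> f ->; apply: symm_sum => b Sb; apply: symm_sc; exact: y_vec_symm.
Qed.
End Sym.

Lemma eq_kos d (p : 'S_d) (b1 b2 : 'I_d -> bool) : b1 =1 b2 -> kos p b1 = kos p b2.
Proof.
move=> e; apply: eq_bigr => k _; apply: eq_bigl => l; by rewrite !e.
Qed.

Section Act.
Variables (R : idomainType) (n m d : nat) (kdA : 'I_n -> calib) (kdV : 'I_m -> calib)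
  (act : 'I_n -> 'I_m -> vect R m).

Lemma tens_actE (eta : tens R n d) (y : tens R m d) u :
  tens_act kdA kdV act eta y u =
  \sum_s \sum_t eta s * y t * ((-1) ^+ mix_sign kdA kdV s t *
     \prod_(k < d) act (tnth s k) (tnth t k) (tnth u k)).
Proof.
rewrite /tens_act sum_ffunE; apply: eq_bigr => s _; rewrite sum_ffunE.
by apply: eq_bigr => t _; rewrite /sc !ffunE.
Qed.

Hypothesis par : forall i j k, act i j k != 0 ->
  is_odd (kdV k) = is_odd (kdA i) (+) is_odd (kdV j).

Lemma tens_act_symm (eta : tens R n d) (y : tens R m d) : symm kdA eta -> symm kdV y ->
  symm kdV (tens_act kdA kdV act eta y).
Proof.
move=> se sy u p; rewrite !tens_actE mulr_sumr.
rewrite (reindex_inj (@tp_inj _ _ p)); apply: eq_bigr => s _.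
rewrite mulr_sumr (reindex_inj (@tp_inj _ _ p)); apply: eq_bigr => t _ /=.
rewrite se sy.
have -> : \prod_(k < d) act (tnth (tp s p) k) (tnth (tp t p) k) (tnth (tp u p) k)
  = \prod_(k < d) act (tnth s k) (tnth t k) (tnth u k).
  rewrite [RHS](reindex_inj (@perm_inj _ p)) /=.
  by apply: eq_bigr => k _; rewrite !tnth_tp.
set Pr := \prod_(k < d) _.
have [->|nz] := eqVneq Pr 0; first by rewrite !mulr0.
have hk : forall k, is_odd (kdV (tnth u k)) =
   is_odd (kdA (tnth s k)) (+) is_odd (kdV (tnth t k)).
  by move=> k; apply: par; move/prodf_neq0: nz; apply.
set e1 := kos p (fun k => is_odd (kdV (tnth u k))).
set e2 := kos p (fun k => is_odd (kdA (tnth s k))).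
set e3 := kos p (fun k => is_odd (kdV (tnth t k))).
have E : odd (e2 + e3 + mix_sign kdA kdV (tp s p) (tp t p)) =
         odd (e1 + mix_sign kdA kdV s t).
  rewrite !oddD K2 /= -/e2 -/e3.
  have -> : kos p (fun k => is_odd (kdA (tnth s k)) (+) is_odd (kdV (tnth t k))) = e1.
    by apply: eq_kos => k; rewrite /= hk.
  by case: (odd e1); case: (odd e2); case: (odd e3); case: (odd (mix_sign _ _ _ _)).
have := sgn_odd R E; rewrite !exprD => E'.
transitivity ((-1) ^+ e2 * (-1) ^+ e3 * (-1) ^+ mix_sign kdA kdV (tp s p) (tp t p)
               * (eta s * y t * Pr)).
  ring.
rewrite E'; ring.
Qed.
End Act.

Section Char.
Variables (R : idomainType) (m d : nat) (kd : 'I_m -> calib).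
Hypothesis c0 : char0 R.

Lemma in_Seq_perm (t b : d.-tuple 'I_m) : perm_eq t b -> in_Seq kd t = in_Seq kd b.
Proof.
move=> /seq.permP pe; rewrite /in_Seq; apply: eq_forallb => x; by rewrite pe.
Qed.

Lemma symm_zero (v : tens R m d) u : symm kd v -> ~~ in_Seq kd u -> v u = 0.
Proof.
move=> sv; rewrite /in_Seq negb_forall => /existsP [x]; rewrite negb_imply -ltnNge.
case/andP=> ox; rewrite count_tnth.
case: (pickP (fun k => tnth u k == x)) => [i /eqP ui|none]; last by rewrite big_pred0.
rewrite (bigD1 i) ?ui ?eqxx //= ltnS.
case: (pickP (fun k => (tnth u k == x) && (k != i))) => [j /andP [/eqP uj nji]|none];
  last by rewrite big_pred0.
move=> _.
have tu : tp u (tperm i j) = u.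
  apply: eq_from_tnth => k; rewrite tnth_tp; case: tpermP => [->|->|//].
  - by rewrite ui uj.
  - by rewrite ui uj.
have := sv u (tperm i j); rewrite tu.
have ko : odd (kos (tperm i j) (fun k => is_odd (kd (tnth u k)))).
  apply: kos_tperm; first by rewrite eq_sym.
  - by rewrite /= ui.
  - by rewrite /= uj.
rewrite -signr_odd ko expr1 mulN1r => /eqP.
rewrite -addr_eq0 -mulr2n -mulr_natl mulf_eq0 => /orP [|/eqP //].
by have := c0 1; rewrite /= => /negbTE ->.
Qed.

Definition leo := fun x y : 'I_m => (x <= y)%N.
Lemma leo_total : total leo. Proof. move=> x y; exact: leq_total. Qed.
Lemma leo_tr : transitive leo. Proof. move=> x y z; exact: leq_trans. Qed.
Lemma leo_anti : antisymmetric leo.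
Proof. by move=> x y /anti_leq /val_inj. Qed.

Lemma char_tGamma (v : tens R m d) : symm kd v ->
  (forall u, exists r, v u = (cfact kd u)%:R * r) -> in_tGamma kd v.
Proof.
move=> sv /fin_all_exists [q hq].
exists (fun b : d.-tuple 'I_m => if sorted leo b then q b else 0).
apply/ffunP => t; rewrite sum_ffunE.
have term : forall b : d.-tuple 'I_m, in_Seq kd b ->
    sc (if sorted leo b then q b else 0) (y_vec R kd b) t =
    if sorted leo b && perm_eq t b then (-1) ^+ (inv_odd kd b + inv_odd kd t) * v b
    else 0.
  move=> b Sb; rewrite /sc /y_vec /x_vec !ffunE.
  case: (sorted leo b) => /=; last by rewrite mul0r.
  case: (perm_eq t b); last by rewrite !mulr0.
  by rewrite hq; ring.
rewrite (eq_bigr _ term).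
case St: (in_Seq kd t); last first.
  rewrite symm_zero ?St // big1 // => b Sb.
  case pe: (perm_eq t b); rewrite ?andbF //.
  by rewrite (in_Seq_perm pe) Sb in St.
set b0 := sort_tuple leo t.
have pb0 : perm_eq t b0 by rewrite perm_sym /b0 /= perm_sort.
have sb0 : sorted leo b0 by apply: sort_sorted; exact: leo_total.
have Sb0 : in_Seq kd b0 by rewrite -(in_Seq_perm pb0).
rewrite (bigD1 b0) //= sb0 pb0 /= big1 ?addr0; last first.
  move=> b /andP [Sb nb]; case sb: (sorted leo b) => //=.
  case pe: (perm_eq t b) => //=.
  suff e : b = b0 by rewrite e eqxx in nb.
  apply: val_inj; apply: (sorted_eq leo_tr leo_anti) => //.
  by rewrite -(permPl pe).
case/tuple_permP: pb0 => p tp0.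
have -> : t = tp b0 p by apply: val_inj; rewrite /= tp0.
rewrite sv; congr (_ * _); apply: sgn_odd.
rewrite oddD K1; last exact: (Seq_distinct Sb0 (perm_refl _)).
by rewrite addbA addbb.
Qed.
End Char.

Lemma free_sum (gT : finGroupType) (X : finType) (to : {action gT &-> X})
  (H : {group gT}) (R : ringType) (F : X -> R) :
  (forall x h, h \in H -> F (to x h) = F x) ->
  (forall x h, h \in H -> F x != 0 -> to x h = x -> h = 1%g) ->
  exists Q : R, \sum_x F x = #|H|%:R * Q.
Proof.
move=> Finv Ffree.
have actsH : [acts H, on [set: X] | to].
  apply/subsetP => h _; rewrite !inE /=; apply/subsetP => x _; by rewrite !inE.
have := orbit_partition actsH; case/and3P => /eqP covP tiP _.
exists (\sum_(A in orbit to H @: [set: X]) if [pick x in A] is Some y then F y else 0).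
have -> : \sum_x F x = \sum_(x in [set: X]) F x by apply: eq_bigl => x; rewrite inE.
rewrite mulr_sumr -{1}covP big_trivIset //.
apply: eq_bigr => A /imsetP [x0 _ ->].
case: pickP => [y yin|none]; last by have := none x0; rewrite orbit_refl.
have -> : orbit to H x0 = orbit to H y by apply/esym/orbit_eqP.
have -> : \sum_(x in orbit to H y) F x = \sum_(x in orbit to H y) F y.
  apply: eq_bigr => x /orbitP [h hH <-]; exact: Finv.
rewrite sumr_const -[LHS]mulr_natl; case: (eqVneq (F y) 0) => [->|nz]; first by rewrite !mulr0.
congr (_ * _); congr (_%:R).
rewrite card_orbit.
have -> : ('C_H[y | to])%g = 1%g.
  apply/trivgP/subsetP => h; rewrite in_setI => /andP [hH hC].
  rewrite inE; apply/eqP; apply: (Ffree y h hH nz).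
  by move/astab1P: hC.
by rewrite indexg1.
Qed.

Lemma sum_orbit (T : finType) d (t0 : d.-tuple T) (R : ringType) (F : d.-tuple T -> R) :
  \sum_(sg : {perm 'I_d}) F (tp t0 sg) = #|stabP t0 predT|%:R * \sum_(s : d.-tuple T | perm_eq s t0) F s.
Proof.
rewrite (partition_big (fun sg => tp t0 sg) (fun s => perm_eq s t0)) /=; last first.
  by move=> sg _; exact: perm_tp.
rewrite mulr_sumr; apply: eq_bigr => s pst.
have -> : \sum_(sg | tp t0 sg == s) F (tp t0 sg) = \sum_(sg in [set sg | tp t0 sg == s]) F s.
  apply: eq_big => sg; [by rewrite inE | by move=> /eqP ->].
rewrite sumr_const -[LHS]mulr_natl; congr (_%:R * _).
case/tuple_permP: pst => s1 e1.
have es : s = tp t0 s1 by apply: val_inj; rewrite /= -e1.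
have -> : [set sg | tp t0 sg == s] = [set (s1 * a)%g | a in stabP t0 predT].
  apply/setP => sg; rewrite inE; apply/eqP/imsetP.
  - move=> e; exists (s1^-1 * sg)%g; last by rewrite mulKVg.
    apply/stabPP => k; split; last by left.
    rewrite permM; set j := (s1^-1)%g k; have sj : s1 j = k by rewrite /j permKV.
    by transitivity (tnth (tp t0 sg) j); [rewrite tnth_tp | rewrite e es tnth_tp sj].
  - case=> a /stabPP Ha ->; rewrite es; apply: eq_from_tnth => k.
    by rewrite !tnth_tp permM (Ha _).1.
by rewrite card_imset //; exact: mulgI.
Qed.

Section PAct.
Variable d : nat.
Definition gT3 := (({perm 'I_d} * {perm 'I_d}) * {perm 'I_d})%type.
Definition pact (x : {perm 'I_d} * {perm 'I_d}) (g : gT3) : {perm 'I_d} * {perm 'I_d} :=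
  ((g.2^-1 * x.1 * g.1.1)%g, (g.2^-1 * x.2 * g.1.2)%g).
Lemma pact1 : (pact^~ 1%g) =1 id.
Proof. by case=> a b; rewrite /pact /= invg1 !mul1g !mulg1. Qed.
Lemma pactM x : act_morph pact x.
Proof.
move=> g h; case: x => a b; rewrite /pact /=.
by rewrite !invMg !mulgA.
Qed.
Definition pto := TotalAction pact1 pactM.
End PAct.

Lemma is_c_odd (c : calib) : is_c c -> is_odd c = false. Proof. by case: c. Qed.
Lemma is_a_c (c : calib) : is_a c -> is_c c = false. Proof. by case: c. Qed.

Section Main.
Variables (R : idomainType) (n m d : nat) (kdA : 'I_n -> calib) (kdV : 'I_m -> calib)
  (act : 'I_n -> 'I_m -> vect R m).
Hypothesis par : forall i j k, act i j k != 0 ->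
  is_odd (kdV k) = is_odd (kdA i) (+) is_odd (kdV j).
Hypothesis aa : forall i j k, is_a (kdA i) -> is_a (kdV j) -> act i j k != 0 -> is_a (kdV k).
Variables (s0 : d.-tuple 'I_n) (t0 : d.-tuple 'I_m) (u : d.-tuple 'I_m).
Hypotheses (Ss0 : in_Seq kdA s0) (St0 : in_Seq kdV t0).
Hypothesis c0 : char0 R.

Definition Pi (s : d.-tuple 'I_n) (t : d.-tuple 'I_m) :=
  \prod_(k < d) act (tnth s k) (tnth t k) (tnth u k).
Definition Phi s t := (-1) ^+ (inv_odd kdA s0 + inv_odd kdA s + (inv_odd kdV t0 + inv_odd kdV t)
   + mix_sign kdA kdV s t) * Pi s t.

Lemma W_eq : tens_act kdA kdV act (y_vec R kdA s0) (y_vec R kdV t0) u =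
  (cfact kdA s0)%:R * (cfact kdV t0)%:R *
    \sum_(s : d.-tuple 'I_n | perm_eq s s0) \sum_(t : d.-tuple 'I_m | perm_eq t t0) Phi s t.
Proof.
rewrite tens_actE mulr_sumr [RHS]big_mkcond; apply: eq_bigr => s _.
rewrite /y_vec /sc /x_vec !ffunE.
case: (perm_eq s s0) => /=; last first.
  by rewrite big1 // => t _; rewrite mulr0 !mul0r.
rewrite mulr_sumr [RHS]big_mkcond; apply: eq_bigr => t _; rewrite !ffunE.
case: (perm_eq t t0) => /=; last by rewrite !mulr0 mul0r.
rewrite /Phi /Pi !exprD; ring.
Qed.

Lemma W_orbit :
  (#|stabP s0 predT| * #|stabP t0 predT|)%:R *
    \sum_(s : d.-tuple 'I_n | perm_eq s s0) \sum_(t : d.-tuple 'I_m | perm_eq t t0) Phi s t =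
  \sum_(sg : {perm 'I_d}) \sum_(tg : {perm 'I_d}) Phi (tp s0 sg) (tp t0 tg).
Proof.
under [RHS]eq_bigr => sg _ do rewrite (sum_orbit t0 (Phi (tp s0 sg))).
rewrite -mulr_sumr (sum_orbit s0 (fun s => \sum_(t : d.-tuple 'I_m | perm_eq t t0) Phi s t)).
by rewrite natrM; ring.
Qed.

Lemma Phi_inv (s : d.-tuple 'I_n) (t : d.-tuple 'I_m) (p : 'S_d) :
  perm_eq s s0 -> perm_eq t t0 -> p \in stabP u (fun j => is_c (kdV j)) ->
  Phi (tp s p) (tp t p) = Phi s t.
Proof.
move=> ps pt /stabPP Hp; rewrite /Phi.
have -> : Pi (tp s p) (tp t p) = Pi s t.
  rewrite /Pi [RHS](reindex_inj (@perm_inj _ p)) /=.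
  by apply: eq_bigr => k _; rewrite !tnth_tp (Hp k).1.
case: (eqVneq (Pi s t) 0) => [->|nz]; first by rewrite !mulr0.
congr (_ * _); apply: sgn_odd.
have hk : forall k, is_odd (kdV (tnth u k)) =
   is_odd (kdA (tnth s k)) (+) is_odd (kdV (tnth t k)).
  by move=> k; apply: par; move/prodf_neq0: nz; apply.
have kz : kos p (fun k => is_odd (kdA (tnth s k)) (+) is_odd (kdV (tnth t k))) = 0%N.
  rewrite -(@eq_kos _ p (fun k => is_odd (kdV (tnth u k)))); last by move=> k; rewrite hk.
  apply: kos_fix => k nk; have [_ [|e]] := Hp k; last by rewrite e eqxx in nk.
  exact: is_c_odd.
rewrite !oddD K2 kz (K1 _ (Seq_distinct Ss0 ps)) (K1 _ (Seq_distinct St0 pt)) /=.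
by case: (odd (inv_odd kdA s0)); case: (odd (inv_odd kdA s)); case: (odd (inv_odd kdV t0));
   case: (odd (inv_odd kdV t)); case: (odd (mix_sign kdA kdV s t));
   case: (odd (kos p (fun k => is_odd (kdA (tnth s k)))));
   case: (odd (kos p (fun k => is_odd (kdV (tnth t k))))).
Qed.

Lemma tp_left (T : finType) (t : d.-tuple T) (P : pred T) (a sg r : {perm 'I_d}) :
  a \in stabP t P -> tp t (r^-1 * sg * a)%g = tp (tp t sg) (r^-1)%g.
Proof.
move=> /stabPP Ha; apply: eq_from_tnth => k.
by rewrite !tnth_tp !permM (Ha _).1.
Qed.

Definition PA := fun i : 'I_n => is_a (kdA i).
Definition PV := fun j : 'I_m => is_a (kdV j).
Definition PC := fun j : 'I_m => is_c (kdV j).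
Definition Hg := setX_group (setX_group (stab_group s0 PA) (stab_group t0 PV)) (stab_group u PC).

Definition Fx (x : {perm 'I_d} * {perm 'I_d}) := Phi (tp s0 x.1) (tp t0 x.2).

Lemma Fx_inv x g : g \in Hg -> Fx (pto d x g) = Fx x.
Proof.
case: g => [[a b] r]; rewrite !in_setX /= => /andP [/andP [aA bB] rC].
case: x => sg tg; rewrite /Fx /= (tp_left _ _ aA) (tp_left _ _ bB).
by apply: Phi_inv; rewrite ?perm_tp ?groupV.
Qed.

Lemma Fx_free x g : g \in Hg -> Fx x != 0 -> pto d x g = x -> g = 1%g.
Proof.
case: g => [[a b] r]; rewrite !in_setX /= => /andP [/andP [/stabPP Ha /stabPP Hb] /stabPP Hr].
case: x => sg tg; rewrite /Fx /Phi /Pi /= => nz [e1 e2].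
have nzk : forall k, act (tnth (tp s0 sg) k) (tnth (tp t0 tg) k) (tnth u k) != 0.
  by move=> k; move: nz; rewrite mulf_eq0 negb_or => /andP [_ /prodf_neq0]; apply.
have r1 : (r^-1)%g = 1%g.
  apply/permP => j; rewrite perm1; apply/eqP; apply: contraT => nj.
  set i := (r^-1)%g j.
  have nij : i != j by [].
  have ai : a (sg i) = sg j.
    by have := congr1 (fun p : {perm 'I_d} => p j) e1; rewrite !permM.
  have bi : b (tg i) = tg j.
    by have := congr1 (fun p : {perm 'I_d} => p j) e2; rewrite !permM.
  have Aa : is_a (kdA (tnth s0 (sg i))).
    have [_ [//|e]] := Ha (sg i).
    by move: nij; rewrite -(inj_eq (@perm_inj _ sg)) -ai e eqxx.
  have Ab : is_a (kdV (tnth t0 (tg i))).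
    have [_ [//|e]] := Hb (tg i).
    by move: nij; rewrite -(inj_eq (@perm_inj _ tg)) -bi e eqxx.
  have Cu : is_c (kdV (tnth u i)).
    have rC : (r^-1)%g \in stabP u PC by rewrite groupV; apply/stabPP.
    move/stabPP: rC => Hr'; have [_ [//|e]] := Hr' i.
    have eij : i = j by apply: (@perm_inj _ (r^-1)%g); rewrite e.
    by rewrite eij eqxx in nij.
  have := nzk i; rewrite !tnth_tp => nzi; have := aa Aa Ab nzi.
  by move=> ai'; rewrite (is_a_c ai') in Cu.
have r1' : r = 1%g by rewrite -[r]invgK r1 invg1.
rewrite r1' invg1 !mul1g in e1 e2.
have a1 : a = 1%g by apply: (mulgI sg); rewrite e1 mulg1.
have b1 : b = 1%g by apply: (mulgI tg); rewrite e2 mulg1.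
by rewrite a1 b1 r1'.
Qed.

Lemma card_stab_split (T : finType) (kd : T -> calib) (b : d.-tuple T) :
  [forall x, is_odd (kd x) ==> (count_mem x b <= 1)%N] ->
  #|stabP b predT| = (#|stabP b (fun x => is_a (kd x))| *
                      \prod_(x | is_c (kd x)) (count_mem x b)`!)%N.
Proof.
move=> /forallP Sb; rewrite !card_stab (bigID (fun x => is_a (kd x))) /=; congr (_ * _)%N.
rewrite big_mkcond [RHS]big_mkcond; apply: eq_bigr => x _ /=.
have := Sb x; case: (kd x) => //= c1.
by case: (count_mem x b) c1 => [|[|]].
Qed.

Lemma div_basic : exists r,
  tens_act kdA kdV act (y_vec R kdA s0) (y_vec R kdV t0) u = (cfact kdV u)%:R * r.
Proof.
have [Q hQ] := free_sum Fx_inv Fx_free.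
exists Q.
have nz : ((#|stabP s0 predT| * #|stabP t0 predT|)%N)%:R != 0 :> R.
  have : (0 < #|stabP s0 predT| * #|stabP t0 predT|)%N.
    by rewrite muln_gt0 !(cardG_gt0 (stab_group _ _)).
  by case: (_ * _)%N => // k _; exact: (c0 k).
apply: (mulfI nz); rewrite W_eq.
have -> : ((#|stabP s0 predT| * #|stabP t0 predT|)%N)%:R *
    ((cfact kdA s0)%:R * (cfact kdV t0)%:R *
     \sum_(s : d.-tuple 'I_n | perm_eq s s0) \sum_(t : d.-tuple 'I_m | perm_eq t t0) Phi s t)
  = (cfact kdA s0)%:R * (cfact kdV t0)%:R *
     (((#|stabP s0 predT| * #|stabP t0 predT|)%N)%:R *
     \sum_(s : d.-tuple 'I_n | perm_eq s s0) \sum_(t : d.-tuple 'I_m | perm_eq t t0) Phi s t).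
  by ring.
rewrite W_orbit pair_big /=.
have -> : \sum_(p : {perm 'I_d} * {perm 'I_d}) Phi (tp s0 p.1) (tp t0 p.2) = \sum_x Fx x by [].
rewrite hQ (card_stab_split Ss0) (card_stab_split St0).
rewrite /Hg !cardsX /= !card_stab /cfact.
rewrite !natrM; ring.
Qed.
End Main.

Section Lin.
Variables (R : idomainType) (n m d : nat) (kdA : 'I_n -> calib) (kdV : 'I_m -> calib)
  (act : 'I_n -> 'I_m -> vect R m).

Lemma tens_act_sum_l (I : finType) (P : pred I) (f : I -> R) (v : I -> tens R n d)
  (w : tens R m d) u :
  tens_act kdA kdV act (\sum_(i | P i) sc (f i) (v i)) w u =
  \sum_(i | P i) f i * tens_act kdA kdV act (v i) w u.
Proof.
rewrite tens_actE.
under eq_bigr => s _ do under eq_bigr => t _ do rewrite sum_ffunE !mulr_suml.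
under eq_bigr => s _ do rewrite exchange_big.
rewrite exchange_big; apply: eq_bigr => i _.
rewrite tens_actE mulr_sumr; apply: eq_bigr => s _.
rewrite mulr_sumr; apply: eq_bigr => t _; rewrite /sc ffunE; ring.
Qed.

Lemma tens_act_sum_r (I : finType) (P : pred I) (f : I -> R) (v : I -> tens R m d)
  (w : tens R n d) u :
  tens_act kdA kdV act w (\sum_(i | P i) sc (f i) (v i)) u =
  \sum_(i | P i) f i * tens_act kdA kdV act w (v i) u.
Proof.
rewrite tens_actE.
under eq_bigr => s _ do under eq_bigr => t _ do rewrite sum_ffunE mulr_sumr mulr_suml.
under eq_bigr => s _ do rewrite exchange_big.
rewrite exchange_big; apply: eq_bigr => i _.
rewrite tens_actE mulr_sumr; apply: eq_bigr => s _.
rewrite mulr_sumr; apply: eq_bigr => t _; rewrite /sc ffunE; ring.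
Qed.
End Lin.

Lemma sum_div (R : comRingType) (c : R) (I : finType) (P : pred I) (F : I -> R) :
  (forall i, P i -> exists r, F i = c * r) -> exists r, \sum_(i | P i) F i = c * r.
Proof.
move=> H; apply: (big_ind (fun x => exists r, x = c * r)).
- by exists 0; rewrite mulr0.
- by move=> x y [r1 ->] [r2 ->]; exists (r1 + r2); rewrite mulrDr.
- exact: H.
Qed.


Unset Implicit Arguments.
Theorem lemma3p16 (R : idomainType) (n m d : nat)
  (kdA : 'I_n -> calib) (mulA : 'I_n -> 'I_n -> vect R n) (oneA : vect R n)
  (kdV : 'I_m -> calib) (act : 'I_n -> 'I_m -> vect R m) :
  is_PID R -> char0 R ->
  calibrated_superalgebra kdA mulA oneA ->
  calibrated_supermodule kdA mulA oneA kdV act ->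
  forall (eta : tens R n d) (y : tens R m d),
    in_tGamma kdA eta -> in_tGamma kdV y ->
    in_tGamma kdV (tens_act kdA kdV act eta y).
Proof.
move=> _ c0 _ [_ _ par aa] eta y [f ef] [g eg].
apply: char_tGamma => //.
  apply: tens_act_symm => //; apply: tGamma_symm; [by exists f | by exists g].
move=> u; rewrite ef eg tens_act_sum_l.
apply: sum_div => s0 Ss0; rewrite tens_act_sum_r mulr_sumr.
apply: sum_div => t0 St0.
have [r hr] := div_basic par aa u Ss0 St0 c0.
by exists (f s0 * (g t0 * r)); rewrite hr; ring.
Qed.
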